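(* Under the assumptions of Lemma lem:Y (Hypothesis (N1), one of (S1), (S2), (S3), initial datum $x\in\mathbb R^n_+\setminus\{0\}$, no extraction), the solution of $X'(t)=\varphi(\langle\mathbf e,X(t)\rangle)X(t)+(D+B^\top)X(t)$, $X(0)=x$, satisfies $$\lim_{t\to\infty}X(t)=\bar m\,\langle\mathbf e,\zeta\rangle^{-1}\zeta,$$ where $\bar m$ is $K^{\frac1{\sigma-1}}$ under (S1), $\delta^{\frac1{\sigma-1}}$ under (S2), $e^K$ under (S3); in particular the limit lies in $\{x\in\mathbb R^n: x_1+\dots+x_n=\bar m,\ x_i\ge0\}$.
   Context: Let $n\ge 2$, $N=\{1,\dots,n\}$, $\mathbf e=(1,\dots,1)^\top$, $\langle\cdot,\cdot\rangle$ the Euclidean inner product; $\mathbb R^n_+=\{x: x_i\ge0\ \forall i\}$. Hypothesis (N1): $B=(b_{ij})$ is a real $n\times n$ matrix with $b_{ij}\ge0$, $b_{ii}=0$ ($b_{ij}X_i$ is the flow from node $i$ to node $j$), and the directed graph with an edge $i\to j$ iff $b_{ij}>0$ is strongly connected; $D$ is the diagonal matrix with $D_{ii}=-\sum_{j\ne i}b_{ij}$. $\zeta$ denotes a vector with all coordinates strictly positive spanning the kernel of $D+B^\top$. Parameters $\Gamma>0$, $K>0$, $\delta>0$. Growth specifications: (S1) $\sigma>1$, $\varphi(m)=\Gamma(1-\frac1K m^{\sigma-1})$; (S2) $0<\sigma<1$, $\varphi(m)=m^{\sigma-1}-\delta$; (S3) $\varphi(m)=\Gamma(1-\frac1K\ln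 m)$. *)

(* Defs.v *)
From HB Require Import structures.
From mathcomp Require Import all_boot all_order all_algebra.
From mathcomp Require Import all_classical all_reals all_analysis.
Set Implicit Arguments. Unset Strict Implicit. Unset Printing Implicit Defensive.
Import Order.TTheory GRing.Theory Num.Theory.
Import numFieldNormedType.Exports.
Local Open Scope ring_scope.
Local Open Scope classical_set_scope.

Definition N1 (R : realType) (n : nat) (B : 'M[R]_n) : Prop :=
  (forall i j, 0 <= B i j) /\ (forall i, B i i = 0) /\
  (forall i j, connect (fun k l => 0 < B k l) i j).

Definition Dmat (R : realType) (n : nat) (B : 'M[R]_n) : 'M[R]_n :=
  \matrix_(i, j) (if i == j then - \sum_(k < n | k != i) B i k else 0).

Definition Amat (R : realType) (n : nat) (B : 'M[R]_n) : 'M[R]_n :=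
  Dmat B + B^T.

Inductive spec := S1 | S2 | S3.

Definition spec_ok (R : realType) (s : spec) (sigma : R) : Prop :=
  match s with
  | S1 => 1 < sigma
  | S2 => 0 < sigma < 1
  | S3 => True
  end.

(* growth function phi (defined for m > 0) *)
Definition phi (R : realType) (s : spec) (Gamma K delta sigma : R) (m : R) : R :=
  match s with
  | S1 => Gamma * (1 - K^-1 * m `^ (sigma - 1))
  | S2 => m `^ (sigma - 1) - delta
  | S3 => Gamma * (1 - K^-1 * ln m)
  end.

Definition mbar (R : realType) (s : spec) (K delta sigma : R) : R :=
  match s with
  | S1 => K `^ ((sigma - 1)^-1)
  | S2 => delta `^ ((sigma - 1)^-1)
  | S3 => expR K
  end.

Definition mass (R : realType) (n : nat) (v : 'I_n -> R) : R := \sum_(i < n) v i.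

(* X (given coordinatewise, X i : R -> R) is a solution on [0, +oo) of
   X' = phi(<e,X>) X + (D + B^T) X,  X(0) = x. Since phi is only defined for
   positive total mass, a solution keeps <e, X(t)> > 0. *)
Definition is_solution (R : realType) (n : nat) (B : 'M[R]_n) (f : R -> R)
    (x : 'I_n -> R) (X : 'I_n -> R -> R) : Prop :=
  (forall i, X i 0 = x i) /\
  (forall i, X i t @[t --> 0^'+] --> x i) /\
  (forall t, 0 <= t -> 0 < mass (fun i => X i t)) /\
  (forall t, 0 < t -> forall i,
      derivable (X i) t 1 /\
      (X i)^`() t = f (mass (fun j => X j t)) * X i t
                    + \sum_(j < n) Amat B i j * X j t).

(* Main.v *)
Require Import Defs.
From HB Require Import structures.
From mathcomp Require Import all_boot all_order all_algebra.
From mathcomp Require Import all_classical all_reals all_analysis.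
From mathcomp Require Import ring lra.
Import Order.TTheory GRing.Theory Num.Theory.
Import numFieldNormedType.Exports.
Local Open Scope ring_scope.
Local Open Scope classical_set_scope.

Lemma decay (R : realType) (s : R) (V dV : R -> R) (lam : R) :
  (forall t : R, s <= t -> is_derive t 1 V (dV t)) ->
  (forall t : R, s <= t -> dV t <= - lam * V t) ->
  forall t0 t : R, s <= t0 -> t0 <= t -> V t <= V t0 * expR (lam * (t0 - t)).
Proof.
move=> hd hle t0 t t00 t0t.
pose W := fun u => V u * expR (lam * u).
have hW : forall u : R, s <= u -> is_derive u 1 W
   (V u * (expR (lam * u) * lam) + expR (lam * u) * dV u).
  move=> u u0.
  have h1 : is_derive u 1 (fun u : R => lam * u) lam.
    have := is_deriveZ lam (is_derive_id u 1).
    by rewrite /GRing.scale /= mulr1.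
  have h2 : is_derive u 1 (fun u => expR (lam * u)) (expR (lam * u) * lam).
    exact: (is_derive1_comp (f := expR) (g := fun u : R => lam * u)).
  have := is_deriveM (hd u u0) h2.
  by [].
have key : W t <= W t0.
  apply: (@ler0_derive1_nincr _ W t0 t) => //.
  - move=> x; rewrite in_itv /= => /andP[x0 _].
    by have [] := hW x (le_trans t00 (ltW x0)).
  - move=> x; rewrite in_itv /= => /andP[x0 _].
    have x00 : s <= x by apply: le_trans (ltW x0).
    rewrite derive1E (@derive_val _ _ _ _ _ _ _ (hW x x00)).
    have := hle x x00; have := expR_gt0 (lam * x) => e0 h.
    have : expR (lam * x) * dV x <= expR (lam * x) * (- lam * V x).
      by rewrite ler_pM2l.
    move=> h'. rewrite /GRing.scale /=. nra.
  - apply: derivable_within_continuous => x; rewrite in_itv /= => /andP[x0 _].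
    by have [] := hW x (le_trans t00 x0).
have e0 := expR_gt0 (lam * t).
move: key; rewrite /W => key.
rewrite -(ler_pM2r e0); apply: (le_trans key).
rewrite -mulrA -expRD; rewrite le_eqVlt; apply/orP; left; apply/eqP; congr (_ * expR _); ring.
Qed.

Lemma decay_cvg (R : realType) (V dV : R -> R) (lam : R) : 0 < lam ->
  (forall t : R, 1 <= t -> is_derive t 1 V (dV t)) ->
  (forall t : R, 1 <= t -> dV t <= - lam * V t) ->
  (forall t : R, 1 <= t -> 0 <= V t) ->
  V t @[t --> +oo] --> 0.
Proof.
move=> l0 hd hle hpos; apply/cvgrPdist_le => e e0.
have le0 : 0 < lam * e by rewrite mulr_gt0.
near=> t.
have t1 : 1 + V 1 / (lam * e) <= t by near: t; apply: nbhs_pinfty_ge; apply: num_real.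
have V10 : 0 <= V 1 by apply: hpos; rewrite lexx.
have q0 : 0 <= V 1 / (lam * e) by rewrite divr_ge0 // ltW.
have tt : 1 <= t by apply: le_trans t1; rewrite lerDl.
have t0 : 0 < t by apply: lt_le_trans tt.
rewrite sub0r normrN ger0_norm; last exact: hpos.
have d := @decay R 1 V dV lam hd hle 1 t (lexx 1) tt.
apply: (le_trans d).
have E1 := expR_ge1Dx (lam * (t - 1)).
have Ep := expR_gt0 (lam * (t - 1)).
have -> : lam * (1 - t) = - (lam * (t - 1)) by ring.
rewrite expRN ler_pdivrMr //.
have h1 : V 1 <= lam * e * (t - 1).
  by rewrite -ler_pdivrMl // mulrC; rewrite lerBrDl addrC.
have h2 : 0 <= lam * (t - 1) by apply: mulr_ge0; [exact: ltW | rewrite subr_ge0].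
nra.
Unshelve. all: end_near.
Qed.
Lemma le_cvg0 (R : realType) (f g : R -> R) :
  (forall t : R, 1 <= t -> 0 <= f t <= g t) ->
  g t @[t --> +oo] --> 0 -> f t @[t --> +oo] --> 0.
Proof.
move=> hfg /cvgrPdist_le hg; apply/cvgrPdist_le => e e0.
have := hg e e0; apply: filter_app.
near=> t => hgt.
have t1 : 1 <= t by near: t; apply: nbhs_pinfty_ge; apply: num_real.
have /andP[f0 fg] := hfg t t1.
move: hgt; rewrite !sub0r !normrN => hgt.
rewrite ger0_norm //; exact: le_trans fg (le_trans (ler_norm _) hgt).
Unshelve. all: end_near.
Qed.

Lemma sq_cvg0 (R : realType) (L : R -> R) :
  (L t * L t) @[t --> +oo] --> 0 -> L t @[t --> +oo] --> 0.
Proof.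
move=> /cvgrPdist_lt hg; apply/cvgrPdist_lt => e e0.
have := hg (e * e) (mulr_gt0 e0 e0); apply: filter_app.
near=> t => hgt.
move: hgt; rewrite !sub0r !normrN ger0_norm; last by rewrite -expr2 sqr_ge0.
move=> h; apply/ltr_normlP; split; nra.
Unshelve. all: end_near.
Qed.

Lemma sq_decay (R : realType) (L dL : R -> R) :
  (forall t : R, 1 <= t -> is_derive t 1 L (dL t)) ->
  (forall t : R, 1 <= t -> L t * dL t <= 0) ->
  (forall c : R, exists2 lam : R, 0 < lam & forall t : R, 1 <= t ->
      L t * L t <= c -> L t * dL t <= - lam * (L t * L t)) ->
  L t @[t --> +oo] --> 0.
Proof.
move=> hd hneg hlam.
pose G := fun t => L t * L t.
pose dG := fun t => L t * dL t + L t * dL t.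
have hG : forall t : R, 1 <= t -> is_derive t 1 G (dG t).
  move=> t t1; exact: (is_deriveM (hd t t1) (hd t t1)).
have Gle : forall t : R, 1 <= t -> G t <= G 1.
  move=> t t1.
  have := @decay R 1 G dG 0 hG _ 1 t (lexx 1) t1.
  rewrite mul0r expR0 mulr1; apply => u u1.
  rewrite /dG oppr0 mul0r.
  have := hneg u u1; lra.
have [lam l0 hl] := hlam (G 1).
apply: sq_cvg0.
apply: (@decay_cvg R G dG (2 * lam)) => //.
- by rewrite mulr_gt0.
- move=> t t1; rewrite /dG.
  have := hl t t1 (Gle t t1); rewrite /G; lra.
- by move=> t _; rewrite /G -expr2 sqr_ge0.
Qed.
Lemma key_exp (R : realType) (y c : R) : y * y <= c ->
  expR (- (1 + c)) * (y * y) <= y * (expR y - 1).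
Proof.
move=> hy.
have e1 := expR_ge1Dx y.
have e0 := expR_gt0 (- (1 + c)).
have yy : 0 <= y * y by rewrite -expr2 sqr_ge0.
have [y0|y0] := leP 0 y.
  have : expR (- (1 + c)) <= 1 by rewrite expR_le1; nra.
  nra.
have e2 := expR_ge1Dx (- y).
have ey := expR_gt0 y.
have h1 : expR y * expR (- y) = 1 by rewrite -expRD subrr expR0.
have h2 : expR (- (1 + c)) <= expR y by rewrite ler_expR; nra.
have h3 : expR y - 1 <= y * expR y by nra.
nra.
Qed.

Lemma G1 (R : realType) (L dL : R -> R) (k a : R) : k * a < 0 ->
  (forall t : R, 1 <= t -> is_derive t 1 L (dL t)) ->
  (forall t : R, 1 <= t -> dL t = k * (expR (a * L t) - 1)) ->
  L t @[t --> +oo] --> 0.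
Proof.
move=> ka hd he; apply: sq_decay hd _ _.
- move=> t t1; rewrite he //.
  set y := a * L t.
  have := @key_exp R y (y * y) (lexx _).
  have := expR_gt0 (- (1 + y * y)).
  have yy : 0 <= y * y by rewrite -expr2 sqr_ge0.
  move=> e0 hk.
  have : 0 <= y * (expR y - 1) by apply: le_trans hk; rewrite mulr_ge0 // ltW.
  rewrite /y => h.
  have : 0 <= (k * a) * (L t * (k * (expR y - 1))) -> L t * (k * (expR y - 1)) <= 0.
    move=> hh; rewrite leNgt; apply/negP => hp.
    have : (k * a) * (L t * (k * (expR y - 1))) < 0 by rewrite nmulr_rlt0.
    by rewrite ltNge hh.
  apply. rewrite /y in h *. 
  have -> : k * a * (L t * (k * (expR (a * L t) - 1))) =
            (k * k) * (a * L t * (expR (a * L t) - 1)) by ring.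
  by apply: mulr_ge0 => //; rewrite -expr2 sqr_ge0.
- move=> c.
  have ka2 : 0 < (k * a) * (k * a) by nra.
  exists (- (k * a) * expR (- (1 + a * a * c))).
    by rewrite mulr_gt0 ?expR_gt0 // oppr_gt0.
  move=> t t1 hc; rewrite he //.
  set y := a * L t.
  have hyc : y * y <= a * a * c.
    rewrite /y; have : 0 <= a * a by rewrite -expr2 sqr_ge0.
    nra.
  have hk := @key_exp R y (a * a * c) hyc.
  set E := expR (- (1 + a * a * c)) in hk *.
  (* multiply hk by (k*a) < 0 and divide by a*a *)
  have h1 : (k * a) * (y * (expR y - 1)) <= (k * a) * (E * (y * y)).
    by rewrite ler_nM2l.
  have h2 : (k * a) * (y * (expR y - 1)) = (a * a) * (L t * (k * (expR y - 1))).
    by rewrite /y; ring.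
  have h3 : (k * a) * (E * (y * y)) = (a * a) * (- (k * a) * E * (L t * L t) * -1).
    by rewrite /y; ring.
  rewrite h2 h3 in h1.
  have a2 : 0 < a * a.
    have : a != 0 by apply/eqP => a0; move: ka; rewrite a0 mulr0 ltxx.
    by move=> an0; rewrite -expr2 exprn_even_gt0.
  move: h1; rewrite ler_pM2l // => h1.
  apply: (le_trans h1); rewrite le_eqVlt; apply/orP; left; apply/eqP; ring.
Qed.

Lemma G2 (R : realType) (L dL : R -> R) (k : R) : 0 < k ->
  (forall t : R, 1 <= t -> is_derive t 1 L (dL t)) ->
  (forall t : R, 1 <= t -> dL t = - k * L t) ->
  L t @[t --> +oo] --> 0.
Proof.
move=> k0 hd he; apply: sq_decay hd _ _.
- move=> t t1; rewrite he //.
  have : 0 <= L t * L t by rewrite -expr2 sqr_ge0.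
  nra.
- move=> c; exists k => // t t1 _; rewrite he //.
  rewrite le_eqVlt; apply/orP; left; apply/eqP; ring.
Qed.
Set Implicit Arguments. Unset Strict Implicit. Unset Printing Implicit Defensive.
Lemma is_derive_sumf (R : realType) (n : nat) (h : 'I_n -> R -> R) (dh : 'I_n -> R) (t : R) :
  (forall i, is_derive t 1 (h i) (dh i)) ->
  is_derive t 1 (fun s => \sum_(i < n) h i s) (\sum_(i < n) dh i).
Proof.
move=> hd; have := is_derive_sum hd.
by rewrite fct_sumE.
Qed.

Lemma mass_deriv (R : realType) (n : nat) (A : 'M[R]_n) (f : R -> R)
  (X : 'I_n -> R -> R) (t : R) :
  (forall j, \sum_(i < n) A i j = 0) ->
  (forall i, is_derive t 1 (X i)
      (f (\sum_(k < n) X k t) * X i t + \sum_(j < n) A i j * X j t)) ->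
  is_derive t 1 (fun s => \sum_(i < n) X i s)
      (f (\sum_(k < n) X k t) * \sum_(k < n) X k t).
Proof.
move=> hcol hX; have := is_derive_sumf hX.
rewrite big_split /= -mulr_sumr exchange_big /=.
have -> : \sum_(j < n) \sum_(i < n) A i j * X j t = 0.
  rewrite (eq_bigr (fun _ => 0)) ?big1 // => j _.
  by rewrite -mulr_suml hcol mul0r.
by rewrite addr0.
Qed.

Lemma cvg_eq1 (R : realType) (f g : R -> R) (l : R) :
  (forall t : R, 1 <= t -> f t = g t) ->
  g t @[t --> +oo] --> l -> f t @[t --> +oo] --> l.
Proof.
move=> hfg hg; apply: cvg_trans hg; apply: near_eq_cvg.
near=> t; apply/esym/hfg.
near: t; apply: nbhs_pinfty_ge; apply: num_real.
Unshelve. all: end_near.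
Qed.

Lemma mass_cvg_gen (R : realType) (f : R -> R) (mb : R) (M : R -> R) :
  0 < mb ->
  ((exists k a : R, k * a < 0 /\
      forall m : R, 0 < m -> f m = k * (expR (a * (ln m - ln mb)) - 1)) \/
   (exists k : R, 0 < k /\ forall m : R, 0 < m -> f m = - k * (ln m - ln mb))) ->
  (forall t : R, 0 < t -> 0 < M t) ->
  (forall t : R, 0 < t -> is_derive t 1 M (f (M t) * M t)) ->
  M t @[t --> +oo] --> mb.
Proof.
move=> mb0 hf Mp hM.
pose L := fun t => ln (M t) - ln mb.
have hL : forall t : R, 1 <= t -> is_derive t 1 L (f (M t)).
  move=> t t1; have t0 : 0 < t by exact: lt_le_trans ltr01 t1.
  have h1 := is_derive1_comp (is_derive1_ln (Mp t t0)) (hM t t0).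
  have h2 := is_deriveB h1 (is_derive_cst (ln mb) t 1).
  have mp := Mp t t0.
  have e : (M t)^-1 * (f (M t) * M t) - 0 = f (M t).
    by rewrite subr0 mulrC -mulrA mulfV ?mulr1 // gt_eqF.
  rewrite e in h2; exact: h2.
have HL : L t @[t --> +oo] --> 0.
  case: hf => [[k [a [ka hf]]]|[k [k0 hf]]].
  - apply: (@G1 R L _ k a ka hL) => t t1.
    by rewrite hf //; apply: Mp; exact: lt_le_trans ltr01 t1.
  - apply: (@G2 R L _ k k0 hL) => t t1.
    by rewrite hf //; apply: Mp; exact: lt_le_trans ltr01 t1.
have H2 : (L t + ln mb) @[t --> +oo] --> ln mb.
  rewrite -[X in _ --> X]add0r; apply: cvgD => //; exact: cvg_cst.
have H3 : expR (L t + ln mb) @[t --> +oo] --> expR (ln mb).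
  by apply: continuous_cvg => //; exact: continuous_expR.
rewrite lnK ?posrE // in H3.
apply: cvg_eq1 H3 => t t1 /=.
rewrite /L subrK lnK // posrE; apply: Mp; exact: lt_le_trans ltr01 t1.
Qed.

Lemma mass_cvg (R : realType) (s : spec) (Gamma K delta sigma : R) (M : R -> R) :
  0 < Gamma -> 0 < K -> 0 < delta -> spec_ok s sigma ->
  (forall t : R, 0 < t -> 0 < M t) ->
  (forall t : R, 0 < t -> is_derive t 1 M (phi s Gamma K delta sigma (M t) * M t)) ->
  M t @[t --> +oo] --> mbar s K delta sigma.
Proof.
move=> G0 K0 d0 hs Mp hM.
have mb0 : 0 < mbar s K delta sigma.
  by case: (s) => /=; rewrite ?powR_gt0 ?expR_gt0.
apply: mass_cvg_gen mb0 _ Mp hM.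
case: s hs => /= hs.
- left; exists (- Gamma), (sigma - 1); split.
    by rewrite mulNr oppr_lt0 mulr_gt0 // subr_gt0.
  move=> m m0.
  rewrite /powR gt_eqF // ln_powR.
  have -> : (sigma - 1) * (ln m - (sigma - 1)^-1 * ln K) = (sigma - 1) * ln m - ln K.
    by field; rewrite subr_eq0 gt_eqF.
  rewrite expRD expRN lnK ?posrE //.
  field; exact: lt0r_neq0.
- left; exists delta, (sigma - 1); split.
    by case/andP: hs => _ h1; rewrite pmulr_rlt0 // subr_lt0.
  move=> m m0.
  rewrite /powR gt_eqF // ln_powR.
  have s1 : sigma - 1 != 0 by case/andP: hs => _ h1; rewrite subr_eq0 lt_eqF.
  have -> : (sigma - 1) * (ln m - (sigma - 1)^-1 * ln delta) = (sigma - 1) * ln m - ln delta.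
    by field.
  rewrite expRD expRN lnK ?posrE //.
  field; exact: lt0r_neq0.
- right; exists (Gamma / K); split; first by rewrite divr_gt0.
  move=> m m0; rewrite expRK.
  field; exact: lt0r_neq0.
Qed.

Section Alg.
Variables (R : realType) (n : nat) (A : 'M[R]_n) (zeta : 'I_n -> R).
Hypothesis hAz : forall i, \sum_(j < n) A i j * zeta j = 0.
Hypothesis hcol : forall j, \sum_(i < n) A i j = 0.

Definition Qf (u : 'I_n -> R) :=
  \sum_(i < n) \sum_(j < n) A i j * zeta j * ((u i - u j) * (u i - u j)).

Lemma Q_ident (u : 'I_n -> R) :
  \sum_(i < n) \sum_(j < n) A i j * zeta j * (u i * u j) = - (Qf u) / 2.
Proof.
have E : Qf u = \sum_(i < n) \sum_(j < n) (u i * u i) * (A i j * zeta j)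
   + \sum_(i < n) \sum_(j < n) (zeta j * (u j * u j)) * A i j
   - 2 * \sum_(i < n) \sum_(j < n) A i j * zeta j * (u i * u j).
  rewrite /Qf mulr_sumr -sumrN -!big_split /=; apply: eq_bigr => i _.
  rewrite mulr_sumr -sumrN -!big_split /=; apply: eq_bigr => j _; ring.
have T1 : \sum_(i < n) \sum_(j < n) (u i * u i) * (A i j * zeta j) = 0.
  rewrite big1 // => i _; by rewrite -mulr_sumr hAz mulr0.
have T3 : \sum_(i < n) \sum_(j < n) (zeta j * (u j * u j)) * A i j = 0.
  rewrite exchange_big /= big1 // => j _; by rewrite -mulr_sumr hcol mulr0.
by rewrite E T1 T3 add0r; field.
Qed.

Lemma var_ident (u : 'I_n -> R) :
  \sum_(i < n) \sum_(j < n) zeta i * zeta j * ((u i - u j) * (u i - u j)) =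
  2 * (\sum_(i < n) zeta i) * (\sum_(i < n) zeta i * (u i * u i))
  - 2 * ((\sum_(i < n) zeta i * u i) * (\sum_(i < n) zeta i * u i)).
Proof.
have E : \sum_(i < n) \sum_(j < n) zeta i * zeta j * ((u i - u j) * (u i - u j)) =
  \sum_(i < n) \sum_(j < n) (zeta i * (u i * u i)) * zeta j
  + \sum_(i < n) \sum_(j < n) zeta i * (zeta j * (u j * u j))
  - 2 * \sum_(i < n) \sum_(j < n) (zeta i * u i) * (zeta j * u j).
  rewrite mulr_sumr -sumrN -!big_split /=; apply: eq_bigr => i _.
  rewrite mulr_sumr -sumrN -!big_split /=; apply: eq_bigr => j _; ring.
rewrite E.
have -> : \sum_(i < n) \sum_(j < n) (zeta i * (u i * u i)) * zeta j =
   (\sum_(i < n) zeta i * (u i * u i)) * \sum_(i < n) zeta i.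
  by rewrite mulr_suml; apply: eq_bigr => i _; rewrite mulr_sumr.
have -> : \sum_(i < n) \sum_(j < n) zeta i * (zeta j * (u j * u j)) =
   (\sum_(i < n) zeta i) * (\sum_(i < n) zeta i * (u i * u i)).
  by rewrite mulr_suml; apply: eq_bigr => i _; rewrite mulr_sumr.
have -> : \sum_(i < n) \sum_(j < n) (zeta i * u i) * (zeta j * u j) =
   (\sum_(i < n) zeta i * u i) * (\sum_(i < n) zeta i * u i).
  by rewrite mulr_suml; apply: eq_bigr => i _; rewrite mulr_sumr.
ring.
Qed.

Hypothesis hz : forall i, 0 < zeta i.
Hypothesis hoff : forall i j, i != j -> 0 <= A i j.

Lemma Q_term_ge0 (u : 'I_n -> R) i j :
  0 <= A i j * zeta j * ((u i - u j) * (u i - u j)).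
Proof.
have [->|ij] := eqVneq i j; first by rewrite subrr !mulr0.
apply: mulr_ge0; first by apply: mulr_ge0; [exact: hoff | exact: ltW].
by rewrite -expr2 sqr_ge0.
Qed.

Lemma Q_ge0 (u : 'I_n -> R) : 0 <= Qf u.
Proof. by apply: sumr_ge0 => i _; apply: sumr_ge0 => j _; exact: Q_term_ge0. Qed.

Lemma Q_edge (u : 'I_n -> R) k l : 0 < A l k ->
  (u k - u l) * (u k - u l) <= (A l k * zeta k)^-1 * Qf u.
Proof.
move=> hlk.
have p0 : 0 < A l k * zeta k by rewrite mulr_gt0.
rewrite ler_pdivlMl //.
have -> : (u k - u l) * (u k - u l) = (u l - u k) * (u l - u k) by ring.
rewrite /Qf (bigD1 l) //= (bigD1 k) //=.
rewrite -addrA lerDl addr_ge0 //.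
  by apply: sumr_ge0 => j _; exact: Q_term_ge0.
by apply: sumr_ge0 => i _; apply: sumr_ge0 => j _; exact: Q_term_ge0.
Qed.

Lemma path_bound (x : 'I_n) (p : seq 'I_n) :
  path (fun k l => 0 < A l k) x p ->
  exists2 C, 0 <= C & forall u, (u x - u (last x p)) * (u x - u (last x p)) <= C * Qf u.
Proof.
elim: p x => [|y p IH] x /=.
  by move=> _; exists 0 => // u; rewrite subrr mulr0 mul0r.
case/andP => hxy /IH [C C0 hC].
have p0 : 0 < A y x * zeta x by rewrite mulr_gt0.
exists (2 * (A y x * zeta x)^-1 + 2 * C).
  by rewrite addr_ge0 // mulr_ge0 // ltW // invr_gt0.
move=> u.
have h1 := Q_edge u hxy.
have h2 := hC u.
have hq := Q_ge0 u.
set a := u x - u y in h1 *; set b := u y - u (last y p) in h2 *.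
have -> : u x - u (last y p) = a + b by rewrite /a /b; ring.
have : (a + b) * (a + b) <= 2 * (a * a) + 2 * (b * b).
  have : 0 <= (a - b) * (a - b) by rewrite -expr2 sqr_ge0.
  lra.
move=> h3; apply: (le_trans h3).
rewrite [X in _ <= X]mulrDl; apply: lerD; by rewrite -mulrA ler_pM2l.
Qed.

Lemma poincare :
  (forall i j, connect (fun k l => 0 < A l k) i j) ->
  exists2 C, 0 < C & forall u i j, (u i - u j) * (u i - u j) <= C * Qf u.
Proof.
move=> hc.
have H : forall ij : 'I_n * 'I_n, exists C : R, (0 <= C) /\ (forall u : 'I_n -> R, (u ij.1 - u ij.2) * (u ij.1 - u ij.2) <= C * Qf u).
  move=> [i j] /=; have /connectP [p hp ->] := hc i j.
  by have [C C0 hC] := path_bound hp; exists C.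
have [c hcc] := choice H.
exists (1 + \sum_(ij : 'I_n * 'I_n) c ij).
  rewrite ltr_pwDl // sumr_ge0 // => ij _; by case: (hcc ij).
move=> u i j.
have [c0 hc0] := hcc (i, j).
apply: (le_trans (hc0 u)); apply: ler_wpM2r; first exact: Q_ge0.
have hs : c (i, j) <= \sum_(ij : 'I_n * 'I_n) c ij.
  rewrite (bigD1 (i, j)) //= lerDl; apply: sumr_ge0 => ij _; by case: (hcc ij).
by apply: (le_trans hs); rewrite lerDr.
Qed.

Lemma var_bound (C : R) (u : 'I_n -> R) :
  0 < \sum_(i < n) zeta i ->
  (forall i j, (u i - u j) * (u i - u j) <= C * Qf u) ->
  \sum_(i < n) zeta i * u i = 0 ->
  \sum_(i < n) zeta i * (u i * u i) <= C * (\sum_(i < n) zeta i) / 2 * Qf u.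
Proof.
move=> Z0 hC hs.
have := var_ident u; rewrite hs mul0r mulr0 subr0 => E.
have : \sum_(i < n) \sum_(j < n) zeta i * zeta j * ((u i - u j) * (u i - u j))
   <= (\sum_(i < n) zeta i) * (\sum_(i < n) zeta i) * (C * Qf u).
  rewrite mulr_suml mulr_suml; apply: ler_sum => i _.
  rewrite mulr_sumr mulr_suml; apply: ler_sum => j _.
  by rewrite ler_wpM2l // mulr_ge0 // ltW.
rewrite E.
set Z := \sum_(i < n) zeta i; set V := \sum_(i < n) zeta i * (u i * u i).
move=> h.
have h1 : Z * (2 * V) <= Z * (C * Z * Qf u).
  have -> : Z * (2 * V) = 2 * Z * V by ring.
  have -> : Z * (C * Z * Qf u) = Z * Z * (C * Qf u) by ring.
  exact: h.
rewrite ler_pM2l // in h1.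
lra.
Qed.

Lemma lin_cvg (Y : 'I_n -> R -> R) :
  0 < \sum_(i < n) zeta i ->
  (forall i j, connect (fun k l => 0 < A l k) i j) ->
  (forall t : R, 0 < t -> forall i, is_derive t 1 (Y i) (\sum_(j < n) A i j * Y j t)) ->
  (forall t : R, 0 < t -> \sum_(i < n) Y i t = 1) ->
  forall i, Y i t @[t --> +oo] --> zeta i / \sum_(k < n) zeta k.
Proof.
move=> Z0 hc hY hsum.
have [C C0 hC] := poincare hc.
set Z := \sum_(k < n) zeta k in Z0 *.
pose c := fun i => zeta i / Z.
pose d := fun i t => Y i t - c i.
pose u := fun t i => d i t / zeta i.
pose V := fun t => \sum_(i < n) (zeta i)^-1 * (d i t * d i t).
have zn0 : forall i, zeta i != 0 by move=> i; rewrite gt_eqF.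
have hdu : forall t i, d i t = zeta i * u t i.
  by move=> t i; rewrite /u mulrC -mulrA mulVf ?mulr1.
have hdY : forall t i, \sum_(j < n) A i j * Y j t = \sum_(j < n) A i j * zeta j * u t j.
  move=> t i.
  have -> : \sum_(j < n) A i j * Y j t =
     \sum_(j < n) A i j * zeta j * u t j + \sum_(j < n) A i j * zeta j * Z^-1.
    rewrite -big_split /=; apply: eq_bigr => j _.
    have -> : Y j t = d j t + c j by rewrite /d subrK.
    by rewrite hdu /c; ring.
  by rewrite -mulr_suml hAz mul0r addr0.
pose dV := fun t => - Qf (u t).
have hV : forall t : R, 1 <= t -> is_derive t 1 V (dV t).
  move=> t t1; have t0 : 0 < t by exact: lt_le_trans ltr01 t1.
  have hi : forall i, is_derive t 1 (fun s => (zeta i)^-1 * (d i s * d i s))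
     ((zeta i)^-1 * (d i t * (\sum_(j < n) A i j * Y j t) + d i t * (\sum_(j < n) A i j * Y j t))).
    move=> i.
    have h1 := is_deriveB (hY t t0 i) (is_derive_cst (c i) t 1).
    have h2 := is_deriveM h1 h1.
    have h3 := is_deriveZ ((zeta i)^-1) h2.
    rewrite subr0 in h3; exact: h3.
  have := is_derive_sumf hi.
  suff -> : \sum_(i < n) (zeta i)^-1 * (d i t * (\sum_(j < n) A i j * Y j t) +
       d i t * (\sum_(j < n) A i j * Y j t)) = dV t by [].
  rewrite /dV.
  have -> : - Qf (u t) = 2 * (- Qf (u t) / 2) by field.
  rewrite -Q_ident mulr_sumr; apply: eq_bigr => i _.
  rewrite hdY hdu.
  have -> : \sum_(j < n) A i j * zeta j * (u t i * u t j) =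
      u t i * \sum_(j < n) A i j * zeta j * u t j.
    by rewrite mulr_sumr; apply: eq_bigr => j _; ring.
  set S := \sum_(j < n) A i j * zeta j * u t j.
  by field.
have Vu : forall t, V t = \sum_(i < n) zeta i * (u t i * u t i).
  move=> t; apply: eq_bigr => i _; rewrite !hdu; by field.
have su : forall t : R, 0 < t -> \sum_(i < n) zeta i * u t i = 0.
  move=> t t0; rewrite (eq_bigr (fun i => d i t)); last by move=> i _; rewrite hdu.
  rewrite /d sumrB hsum // /c -mulr_suml mulfV ?subrr // gt_eqF //.
have Vge0 : forall t : R, 1 <= t -> 0 <= V t.
  move=> t _; rewrite Vu; apply: sumr_ge0 => i _.
  apply: mulr_ge0; [exact: ltW | by rewrite -expr2 sqr_ge0].
have CZ : 0 < C * Z by rewrite mulr_gt0.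
have hle : forall t : R, 1 <= t -> dV t <= - (2 / (C * Z)) * V t.
  move=> t t1; have t0 : 0 < t by exact: lt_le_trans ltr01 t1.
  have hb := var_bound Z0 (hC (u t)) (su t t0).
  rewrite -Vu in hb.
  rewrite /dV mulNr lerN2.
  have := Q_ge0 (u t).
  have e : (2 / (C * Z)) * (C * Z / 2 * Qf (u t)) = Qf (u t).
    by field; rewrite !gt_eqF.
  move=> _; rewrite -[X in _ <= X]e; apply: ler_wpM2l; last exact: hb.
  by rewrite ltW // divr_gt0.
have l0 : 0 < 2 / (C * Z) by rewrite divr_gt0.
have HV := @decay_cvg R V dV _ l0 hV hle Vge0.
move=> i.
have Hd : d i t @[t --> +oo] --> 0.
  apply: sq_cvg0.
  apply: (@le_cvg0 R _ (fun t => zeta i * V t)).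
    move=> t t1; rewrite -expr2 sqr_ge0 /=.
    rewrite /V (bigD1 i) //= mulrDr mulrA mulfV // mul1r lerDl.
    apply: mulr_ge0; first exact: ltW.
    apply: sumr_ge0 => j _.
    apply: mulr_ge0; [by rewrite invr_ge0 ltW | by rewrite -expr2 sqr_ge0].
  rewrite -(mulr0 (zeta i)); apply: cvgM => //; exact: cvg_cst.
have : (d i t + c i) @[t --> +oo] --> 0 + c i.
  apply: cvgD => //; exact: cvg_cst.
rewrite add0r /c; apply: cvg_trans; apply: near_eq_cvg.
by near=> t; rewrite /d subrK.
Unshelve. all: end_near.
Qed.

End Alg.

Unset Implicit Arguments.

Theorem mainTheorem3 (R : realType) (n : nat) (B : 'M[R]_n) (zeta : 'I_n -> R)
    (s : spec) (Gamma K delta sigma : R) (x : 'I_n -> R) (X : 'I_n -> R -> R) :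
  (2 <= n)%N ->
  N1 B ->
  (forall i, 0 < zeta i) ->
  (forall i, \sum_(j < n) Amat B i j * zeta j = 0) ->
  (forall v : 'I_n -> R, (forall i, \sum_(j < n) Amat B i j * v j = 0) ->
     exists c : R, forall i, v i = c * zeta i) ->
  0 < Gamma -> 0 < K -> 0 < delta -> spec_ok s sigma ->
  (forall i, 0 <= x i) -> (exists i, x i != 0) ->
  is_solution B (phi s Gamma K delta sigma) x X ->
  (forall i, X i t @[t --> +oo] -->
       mbar s K delta sigma * (mass zeta)^-1 * zeta i) /\
  (mass (fun i => mbar s K delta sigma * (mass zeta)^-1 * zeta i)
     = mbar s K delta sigma /\
   forall i, 0 <= mbar s K delta sigma * (mass zeta)^-1 * zeta i).
Proof.
move=> hn [hB0 [hBd hBc]] hz hAz _ G0 K0 d0 hs _ _ [_ [_ [hmass hder]]].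
have hoff : forall i j, i != j -> Amat B i j = B j i.
  by move=> i j ij; rewrite /Amat !mxE (negbTE ij) add0r.
have hcol : forall j, \sum_(i < n) Amat B i j = 0.
  move=> j; rewrite /Amat.
  under eq_bigr do rewrite !mxE.
  rewrite big_split /= -big_mkcond /= big_pred1_eq.
  by rewrite [X in _ + X](bigD1 j) //= hBd add0r addNr.
have hoff0 : forall i j, i != j -> 0 <= Amat B i j.
  by move=> i j ij; rewrite hoff.
have hconn : forall i j, connect (fun k l => 0 < Amat B l k) i j.
  move=> i j; apply: connect_sub (hBc i j) => k l hkl; apply: connect1.
  have kl : l != k by apply/eqP => e; move: hkl; rewrite e hBd ltxx.
  by rewrite hoff.
pose M := fun t => \sum_(k < n) X k t.
have hXd : forall t : R, 0 < t -> forall i, is_derive t 1 (X i)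
    (phi s Gamma K delta sigma (\sum_(k < n) X k t) * X i t
      + \sum_(j < n) Amat B i j * X j t).
  move=> t t0 i; have [hd he] := hder t t0 i.
  by apply: DeriveDef => //; rewrite -derive1E he.
have hM : forall t : R, 0 < t -> is_derive t 1 M
    (phi s Gamma K delta sigma (M t) * M t).
  by move=> t t0; exact: mass_deriv hcol (hXd t t0).
have Mp : forall t : R, 0 < t -> 0 < M t.
  by move=> t t0; exact: hmass t (ltW t0).
have HM := mass_cvg G0 K0 d0 hs Mp hM.
pose Y := fun i t => X i t / M t.
have hY : forall t : R, 0 < t -> forall i,
    is_derive t 1 (Y i) (\sum_(j < n) Amat B i j * Y j t).
  move=> t t0 i.
  have mn0 : M t != 0 by rewrite gt_eqF // Mp.
  have h3 := is_deriveM (hXd t t0 i) (is_deriveV mn0 (hM t t0)).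
  set v := (X in is_derive _ _ _ X) in h3.
  have -> : \sum_(j < n) Amat B i j * Y j t = v.
    rewrite /v /Y /GRing.scale /=.
    rewrite (eq_bigr (fun j => (Amat B i j * X j t) / M t)); last by move=> j _; ring.
    rewrite -mulr_suml -/(M t).
    by field.
  exact: h3.
have hsum : forall t : R, 0 < t -> \sum_(i < n) Y i t = 1.
  by move=> t t0; rewrite /Y -mulr_suml -/(M t) mulfV // gt_eqF // Mp.
have i0 : 'I_n := Ordinal (leq_trans (isT : (0 < 2)%N) hn).
have Z0 : 0 < \sum_(k < n) zeta k.
  apply: (lt_le_trans (hz i0)); rewrite (bigD1 i0) //= lerDl.
  by apply: sumr_ge0 => i _; exact: ltW.
have HY := lin_cvg hAz hcol hz hoff0 Z0 hconn hY hsum.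
have mb0 : 0 <= mbar s K delta sigma.
  by case: (s) => /=; rewrite ?powR_ge0 ?expR_ge0.
split.
  move=> i.
  have H : (M t * Y i t) @[t --> +oo] -->
      mbar s K delta sigma * (zeta i / \sum_(k < n) zeta k).
    by apply: cvgM => //; exact: HY.
  rewrite /mass.
  have -> : mbar s K delta sigma / (\sum_(k < n) zeta k) * zeta i =
    mbar s K delta sigma * (zeta i / \sum_(k < n) zeta k) by rewrite mulrAC -mulrA.
  apply: cvg_eq1 H => t t1 /=.
  rewrite /Y /M mulrC -mulrA mulVf ?mulr1 // gt_eqF //.
  by apply: Mp; exact: lt_le_trans ltr01 t1.
split.
  rewrite /mass -mulr_sumr -mulrA mulVf ?mulr1 //.
  by rewrite gt_eqF.
move=> i; apply: mulr_ge0; last exact: ltW.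
by apply: mulr_ge0 => //; rewrite invr_ge0 ltW.
Qed.
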